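(* Let $0<c<C<\infty$ be fixed. For $i=1,2$ let $l^i,r^i:[0,T]\times\mathbb{R}\to\mathbb{R}$ satisfy Assumption (A) with these constants $c,C$, let $s^i\in C[0,T]$ and $a^i\in\mathbb{R}$ with $l^i(T,a^i)\le0\le r^i(T,a^i)$, and let $(x^i,k^i)$ be the solution of $\mathbb{BSP}_{l^i}^{r^i}(s^i,a^i)$. Then $$\sup_{t\in[0,T]}|k^1_t-k^2_t|\le \frac{2C}{c}|a^1-a^2|+\frac{4C}{c}\sup_{t\in[0,T]}|s^1_t-s^2_t|+\frac{2}{c}\big(\bar L_T\vee\bar R_T\big),$$ where $\bar L_T=\sup_{(t,x)\in[0,T]\times\mathbb{R}}|l^1(t,x)-l^2(t,x)|$ and $\bar R_T=\sup_{(t,x)\in[0,T]\times\mathbb{R}}|r^1(t,x)-r^2(t,x)|$.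
   Context: $C[0,T]$: real continuous functions on $[0,T]$; $BV[0,T]$: functions in $C[0,T]$ starting from $0$ with bounded variation; $I[0,T]$: nondecreasing functions in $C[0,T]$ starting from $0$. Assumption (A) on $l,r:[0,T]\times\mathbb{R}\to\mathbb{R}$ (with constants $0<c<C$): (i) for each $x$, $l(\cdot,x),r(\cdot,x)\in C[0,T]$; (ii) for each $t$, $l(t,\cdot)$, $r(t,\cdot)$ strictly increasing; (iii) $c|x-y|\le|l(t,x)-l(t,y)|\le C|x-y|$ and $c|x-y|\le|r(t,x)-r(t,y)|\le C|x-y|$ for all $t,x,y$; (iv) $\inf_{t,x}(r(t,x)-l(t,x))>0$. A solution of $\mathbb{BSP}_l^r(s,a)$ (for $s\in C[0,T]$, $a\in\mathbb{R}$, $l(T,a)\le0\le r(T,a)$) is a pair $(x,k)\in C[0,T]\times BV[0,T]$ with $x_t=a+s_T-s_t+k_T-k_t$, $l(t,x_t)\le0\le r(t,x_t)$ for all $t$, and $k=k^r-k^l$, $k^r,k^l\in I[0,T]$, $\int_0^T\mathbf 1_{\{l(s,x_s)<0\}}dk^l_s=0$, $\int_0^T\mathbf 1_{\{r(s,x_s)>0\}}dk^r_s=0$; it exists and is unique under Assumption (A). *)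

(* Defs.v *)
From HB Require Import structures.
From mathcomp Require Import all_boot all_order all_algebra.
From mathcomp Require Import all_classical all_reals all_analysis.
Set Implicit Arguments. Unset Strict Implicit. Unset Printing Implicit Defensive.
Import Order.TTheory GRing.Theory Num.Theory.
Import numFieldNormedType.Exports.
Local Open Scope classical_set_scope.
Local Open Scope ring_scope.

Section Defs.
Variable R : realType.

Definition assumptionA (T c C : R) (l r : R -> R -> R) : Prop :=
  [/\ (forall x, {within `[0, T], continuous (fun t => l t x)})
    /\ (forall x, {within `[0, T], continuous (fun t => r t x)}),
      (forall t, t \in `[0, T] -> forall x y, x < y -> l t x < l t y)
    /\ (forall t, t \in `[0, T] -> forall x y, x < y -> r t x < r t y),
      (forall t, t \in `[0, T] -> forall x y,
          c * `|x - y| <= `|l t x - l t y| <= C * `|x - y|)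
    /\ (forall t, t \in `[0, T] -> forall x y,
          c * `|x - y| <= `|r t x - r t y| <= C * `|x - y|) &
      (0 < ereal_inf [set (r t x - l t x)%:E | t in `[0%R, T] & x in [set: R]])%E].

Definition in_I (T : R) (k : R -> R) : Prop :=
  [/\ {within `[0, T], continuous k}, k 0 = 0 &
      forall s t, 0 <= s -> s <= t -> t <= T -> k s <= k t].

Definition extT (T : R) (k : R -> R) : R -> R :=
  fun t => k (Num.max 0 (Num.min t T)).

(** Stieltjes integral over [0,T] of the indicator of A with respect to
    the nondecreasing continuous function k vanishes:
    int_0^T 1_A(s) dk_s = 0, computed with the Lebesgue-Stieltjes
    measure of (the constant extension of) k. *)
Definition stieltjes_ind_zero (T : R) (k : R -> R) (A : set R) : Prop :=
  forall f : cumulative R R, (f : R -> R) = extT T k ->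
    (\int[lebesgue_stieltjes_measure f]_(t in `[0%R, T]) (\1_A t)%:E = 0)%E.

Definition BSP_solution (T : R) (l r : R -> R -> R) (s : R -> R) (a : R)
    (x k : R -> R) : Prop :=
  [/\ {within `[0, T], continuous x},
      forall t, t \in `[0, T] -> x t = a + s T - s t + k T - k t,
      forall t, t \in `[0, T] -> l t (x t) <= 0 <= r t (x t) &
      exists kr kl : R -> R,
        [/\ in_I T kr, in_I T kl,
            forall t, t \in `[0, T] -> k t = kr t - kl t,
            stieltjes_ind_zero T kl [set t | l t (x t) < 0] &
            stieltjes_ind_zero T kr [set t | r t (x t) > 0]]].

End Defs.

(* Main.v *)
Require Import Defs.
From HB Require Import structures.
From mathcomp Require Import all_boot all_order all_algebra.
From mathcomp Require Import all_classical all_reals all_analysis.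
Import Order.TTheory GRing.Theory Num.Theory.
Import numFieldNormedType.Exports.
Local Open Scope classical_set_scope.
Local Open Scope ring_scope.
Set Implicit Arguments. Unset Strict Implicit.

Lemma within_eps (R : realType) (A : set R) (f : R -> R) :
  {within A, continuous f} -> forall x, A x -> forall e, 0 < e ->
  exists2 d, 0 < d & forall y, A y -> `|x - y| < d -> `|f x - f y| < e.
Proof.
move=> /subspace_continuousP H x Ax e e0.
have := H x Ax.
move=> /cvgr_dist_lt /(_ e e0).
rewrite near_withinE.
move=> /nbhs_ballP[d /= d0 Hd]; exists d => // y Ay xy.
by apply: Hd => //.
Qed.

From mathcomp Require Import lra ring.
Lemma clamp_in (R : realType) (T t : R) : 0 <= T ->
  Num.max 0 (Num.min t T) \in `[0, T].
Proof.
move=> T0; rewrite in_itv /=; apply/andP; split.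
  by rewrite le_max lexx.
by rewrite ge_max T0 ge_min lexx orbT.
Qed.

Lemma dist_le (R : realType) (x y z : R) : x - y <= z -> y - x <= z -> `|x - y| <= z.
Proof. by move=> h1 h2; rewrite ler_norml; apply/andP; split; lra. Qed.

Lemma dist_ge (R : realType) (x y : R) : x - y <= `|x - y| /\ y - x <= `|x - y|.
Proof. by split; [exact: ler_norm | rewrite distrC; exact: ler_norm]. Qed.

Lemma max_lip (R : realType) (a b c : R) : `|Num.max c a - Num.max c b| <= `|a - b|.
Proof.
have [h1 h2] := dist_ge a b.
by case: (leP c a) => ca; case: (leP c b) => cb; apply: dist_le; lra.
Qed.

Lemma min_lip (R : realType) (a b c : R) : `|Num.min a c - Num.min b c| <= `|a - b|.
Proof.
have [h1 h2] := dist_ge a b.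
by case: (leP a c) => ca; case: (leP b c) => cb; apply: dist_le; lra.
Qed.

Lemma clamp_lip (R : realType) (T s t : R) :
  `|Num.max 0 (Num.min s T) - Num.max 0 (Num.min t T)| <= `|s - t|.
Proof. exact: le_trans (max_lip _ _ _) (min_lip _ _ _). Qed.

Lemma extT_cont (R : realType) (T : R) (k : R -> R) : 0 <= T ->
  {within `[0, T], continuous k} -> continuous (extT T k).
Proof.
move=> T0 hk x; apply/cvgrPdist_lt => e e0.
have [d d0 Hd] := within_eps hk (clamp_in x T0) e0.
apply/nbhs_ballP; exists d => // t /= xt.
apply: Hd; first exact: (clamp_in t T0).
exact: le_lt_trans (clamp_lip _ _ _) xt.
Qed.

Lemma clamp_mono (R : realType) (T s t : R) : s <= t ->
  Num.max 0 (Num.min s T) <= Num.max 0 (Num.min t T).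
Proof.
move=> st; apply: le_max2 => //; exact: le_min2.
Qed.

Lemma extT_nd (R : realType) (T : R) (k : R -> R) : 0 <= T -> in_I T k ->
  {homo extT T k : x y / x <= y}.
Proof.
move=> T0 [_ _ hm] x y xy; rewrite /extT.
have := clamp_in x T0; have := clamp_in y T0.
rewrite !in_itv /= => /andP[hy1 hy2] /andP[hx1 hx2].
by apply: hm => //; exact: clamp_mono.
Qed.

Lemma ls_oc (R : realType) (f : cumulative R R) (a b : R) : a < b ->
  lebesgue_stieltjes_measure f (`]a, b] : set _) = (f b - f a)%:E.
Proof.
move=> ab.
rewrite /lebesgue_stieltjes_measure/= /measure_extension/=.
rewrite measurable_mu_extE//; last exact: is_ocitv.
by rewrite /= wlength_itv/= lte_fin ab.
Qed.

Lemma extT_in (R : realType) (T : R) (k : R -> R) t : 0 <= t -> t <= T ->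
  extT T k t = k t.
Proof.
move=> t0 tT; rewrite /extT.
have -> : Num.min t T = t by apply/min_idPl.
by have -> : Num.max 0 t = t by apply/max_idPr.
Qed.

Lemma LS_const (R : realType) (T : R) (k : R -> R) (A : set R) :
  in_I T k -> stieltjes_ind_zero T k A ->
  forall u v, 0 <= u -> u < v -> v <= T ->
  (forall t, u < t -> t <= v -> A t) -> k v = k u.
Proof.
move=> hk hz u v u0 uv vT hA.
have T0 : 0 <= T by lra.
have nd := extT_nd T0 hk.
have rc : right_continuous (extT T k).
  apply: right_continuousW; apply: extT_cont => //; by case: hk.
pose F : cumulative R R := HB.pack (extT T k) (isCumulative.Build R _ R (extT T k) nd rc).
have hint := hz F erefl.
have mI : measurable (`]u, v]%classic : set (g_sigma_algebraType R.-ocitv.-measurable)).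
  by apply: sub_sigma_algebra; exact: is_ocitv.
have le : (lebesgue_stieltjes_measure F `]u, v] <= 0)%E.
  rewrite -hint ge0_integralE; last by move=> x _; rewrite lee_fin.
  apply: ereal_sup_ubound => /=.
  exists (indic_nnsfun R mI).
    move=> x /=.
    rewrite /measurable_realfun.mindic indicE /patch.
    have [xI|xI] := boolP (x \in (`]u, v]%classic : set R)); last first.
      by rewrite /=; case: ifP => _; rewrite ?indicE ?lee_fin.
    move: (xI); rewrite in_setE /= in_itv /= => /andP[ux xv].
    have -> : (x \in (`[0%R, T]%classic : set R)) = true.
      by apply/idP; rewrite in_setE /= in_itv /=; apply/andP; split; lra.
    by rewrite indicE mem_set //; exact: hA ux xv.
  by rewrite /= /measurable_realfun.mindic sintegral_indic.
move: le; rewrite ls_oc // lee_fin /= !extT_in //; try lra.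
case: hk => _ _ hm; have := hm u v u0 (ltW uv) vT; lra.
Qed.

Lemma eps4 (R : realType) (A : set R) (f1 f2 f3 f4 : R -> R) :
  {within A, continuous f1} -> {within A, continuous f2} ->
  {within A, continuous f3} -> {within A, continuous f4} ->
  forall x, A x -> forall e, 0 < e ->
  exists2 d, 0 < d & forall y, A y -> `|x - y| < d ->
    [/\ `|f1 x - f1 y| < e, `|f2 x - f2 y| < e, `|f3 x - f3 y| < e &
        `|f4 x - f4 y| < e].
Proof.
move=> c1 c2 c3 c4 x Ax e e0.
have [d1 d10 h1] := within_eps c1 Ax e0.
have [d2 d20 h2] := within_eps c2 Ax e0.
have [d3 d30 h3] := within_eps c3 Ax e0.
have [d4 d40 h4] := within_eps c4 Ax e0.
exists (Num.min (Num.min d1 d2) (Num.min d3 d4)).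
  by rewrite !lt_min d10 d20 d30 d40.
move=> y Ay; rewrite !lt_min => /andP[/andP[y1 y2] /andP[y3 y4]].
by split; [exact: h1|exact: h2|exact: h3|exact: h4].
Qed.

Lemma norm_lt2 (R : realType) (x e : R) : `|x| < e -> -e < x /\ x < e.
Proof. by rewrite ltr_norml => /andP[]. Qed.

Lemma dist_lt (R : realType) (x y d : R) : x - y < d -> y - x < d -> `|x - y| < d.
Proof. by move=> h1 h2; rewrite ltr_norml; apply/andP; split; lra. Qed.

Definition Ediff (R : realType) (T : R) (kr1 kl1 kr2 kl2 : R -> R) (t : R) :=
  (kr1 T - kl1 T - (kr1 t - kl1 t)) - (kr2 T - kl2 T - (kr2 t - kl2 t)).

Lemma time_arg (R : realType) (T δ : R) (kr1 kl1 kr2 kl2 : R -> R) (A1 A2 : set R) :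
  0 < T -> 0 <= δ -> in_I T kr1 -> in_I T kl1 -> in_I T kr2 -> in_I T kl2 ->
  stieltjes_ind_zero T kr1 A1 -> stieltjes_ind_zero T kl2 A2 ->
  (forall t, 0 <= t -> t <= T -> δ < Ediff T kr1 kl1 kr2 kl2 t -> A1 t /\ A2 t) ->
  forall t, 0 <= t -> t <= T -> Ediff T kr1 kl1 kr2 kl2 t <= δ.
Proof.
move=> T0 d0 hr1 hl1 hr2 hl2 z1 z2 hA t0 t00 t0T.
set E := Ediff T kr1 kl1 kr2 kl2.
rewrite leNgt; apply/negP => hlt.
pose S := [set v | t0 <= v /\ v <= T /\ E v <= δ].
have ET : E T = 0 by rewrite /E /Ediff; lra.
have ST : S T by split => //; split => //; lra.
have lbS : lbound S t0 by move=> y [].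
have hlb : has_lbound S by exists t0.
pose σ := inf S.
have t0σ : t0 <= σ := lb_le_inf (ex_intro _ T ST) lbS.
have σT : σ <= T := ge_inf hlb ST.
have hbelow : forall v, t0 <= v -> v < σ -> δ < E v.
  move=> v t0v vσ; rewrite ltNge; apply/negP => Ev.
  have : σ <= v by apply: (ge_inf hlb); split => //; split => //; lra.
  lra.
have [c1 c2 c3 c4] : [/\ {within `[0, T], continuous kr1}, {within `[0, T], continuous kl1},
   {within `[0, T], continuous kr2} & {within `[0, T], continuous kl2}].
  by case: hr1; case: hl1; case: hr2; case: hl2.
have σin : `[0, T]%classic σ.
  by rewrite /= in_itv /=; apply/andP; split; lra.
have Eσ : E σ <= δ.
  rewrite leNgt; apply/negP => hσ.
  have e0 : 0 < (E σ - δ) / 4 by lra.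
  have [d dp hd] := eps4 c1 c2 c3 c4 σin e0.
  have [y Sy yd] := @inf_lt _ S (σ + d) (ex_intro _ T ST) ltac:(lra).
  have σy : σ <= y := ge_inf hlb Sy.
  case: Sy => t0y [yT Ey].
  have yin : `[0, T]%classic y by rewrite /= in_itv /=; apply/andP; split; lra.
  have dy : `|σ - y| < d by apply: dist_lt; lra.
  have [/norm_lt2 [h1 h1'] /norm_lt2 [h2 h2'] /norm_lt2 [h3 h3'] /norm_lt2 [h4 h4']] :=
    hd y yin dy.
  move: hσ Ey h1 h1' h2 h2' h3 h3' h4 h4'; rewrite /E /Ediff; lra.
have t0σ' : t0 < σ.
  rewrite lt_neqAle t0σ andbT; apply/negP => /eqP h; move: Eσ; rewrite -h; lra.
have e0 : 0 < (E t0 - E σ) / 4 by lra.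
have [d dp hd] := eps4 c1 c2 c3 c4 σin e0.
pose v := σ - Num.min ((σ - t0) / 2) (d / 2).
have m1 : Num.min ((σ - t0) / 2) (d / 2) <= (σ - t0) / 2 by rewrite ge_min lexx.
have m2 : Num.min ((σ - t0) / 2) (d / 2) <= d / 2 by rewrite ge_min lexx orbT.
have m3 : 0 < Num.min ((σ - t0) / 2) (d / 2) by rewrite lt_min; apply/andP; split; lra.
have v1 : t0 < v by rewrite /v; lra.
have v2 : v < σ by rewrite /v; lra.
have v3 : σ - v < d by rewrite /v; lra.
clearbody v.
have vin : `[0, T]%classic v by rewrite /= in_itv /=; apply/andP; split; lra.
have dv : `|σ - v| < d by apply: dist_lt; lra.
have [/norm_lt2 [h1 h1'] /norm_lt2 [h2 h2'] /norm_lt2 [h3 h3'] /norm_lt2 [h4 h4']] :=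
  hd v vin dv.
have hA' : forall w, t0 < w -> w <= v -> A1 w /\ A2 w.
  move=> w t0w wv; apply: hA; try lra.
  apply: hbelow; lra.
have e1 : kr1 v = kr1 t0.
  apply: (LS_const hr1 z1); try lra.
  by move=> w h1w h2w; case: (hA' w h1w h2w).
have e2 : kl2 v = kl2 t0.
  apply: (LS_const hl2 z2); try lra.
  by move=> w h1w h2w; case: (hA' w h1w h2w).
have e3 : kl1 t0 <= kl1 v by case: hl1 => _ _ hm; apply: hm; lra.
have e4 : kr2 t0 <= kr2 v by case: hr2 => _ _ hm; apply: hm; lra.
move: e1 e2 e3 e4 h1 h1' h2 h2' h3 h3' h4 h4'; rewrite /E /Ediff; lra.
Qed.


Lemma side (R : realType) (T c dl dr p : R) (l1 r1 l2 r2 : R -> R -> R)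
  (x1 x2 kr1 kl1 kr2 kl2 : R -> R) :
  0 < T -> 0 < c -> 0 <= dl -> 0 <= dr -> 0 <= p ->
  in_I T kr1 -> in_I T kl1 -> in_I T kr2 -> in_I T kl2 ->
  stieltjes_ind_zero T kr1 [set t | r1 t (x1 t) > 0] ->
  stieltjes_ind_zero T kl2 [set t | l2 t (x2 t) < 0] ->
  (forall t, 0 <= t -> t <= T -> l1 t (x1 t) <= 0) ->
  (forall t, 0 <= t -> t <= T -> 0 <= r2 t (x2 t)) ->
  (forall t, 0 <= t -> t <= T -> forall x y, x < y -> l2 t x < l2 t y) ->
  (forall t, 0 <= t -> t <= T -> forall x y, x < y -> r1 t x < r1 t y) ->
  (forall t, 0 <= t -> t <= T -> forall x y, c * `|x - y| <= `|l2 t x - l2 t y|) ->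
  (forall t, 0 <= t -> t <= T -> forall x y, c * `|x - y| <= `|r1 t x - r1 t y|) ->
  (forall t, 0 <= t -> t <= T -> forall x, `|l1 t x - l2 t x| <= dl) ->
  (forall t, 0 <= t -> t <= T -> forall x, `|r1 t x - r2 t x| <= dr) ->
  (forall t, 0 <= t -> t <= T -> `|x1 t - x2 t - Ediff T kr1 kl1 kr2 kl2 t| <= p) ->
  forall t, 0 <= t -> t <= T -> Ediff T kr1 kl1 kr2 kl2 t <= p + Num.max dl dr / c.
Proof.
move=> T0 c0 dl0 dr0 p0 ir1 il1 ir2 il2 z1 z2 hl1 hr2 ml2 mr1 Ll2 Lr1 Bl Br Bx.
have mx0 : 0 <= Num.max dl dr by rewrite le_max dl0.
have m0 : 0 <= Num.max dl dr / c by apply: divr_ge0 => //; lra.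
apply: (time_arg T0 _ ir1 il1 ir2 il2 z1 z2); first lra.
move=> t t0 tT hE.
set E := Ediff T kr1 kl1 kr2 kl2 t in hE.
have hx : `|x1 t - x2 t - E| <= p := Bx t t0 tT.
have [hx1 hx2] := dist_ge (x1 t - x2 t) E.
have gap : Num.max dl dr / c < x1 t - x2 t.
  move: hx; rewrite ler_norml => /andP[h1 h2]; lra.
have cgap : Num.max dl dr < c * (x1 t - x2 t).
  have -> : Num.max dl dr = c * (Num.max dl dr / c) by field; lra.
  by rewrite ltr_pM2l.
have gdl : dl <= Num.max dl dr by rewrite le_max lexx.
have gdr : dr <= Num.max dl dr by rewrite le_max lexx orbT.
have x21 : x2 t < x1 t by lra.
have nx : `|x1 t - x2 t| = x1 t - x2 t by rewrite gtr0_norm // subr_gt0.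
split => /=.
- have := Lr1 t t0 tT (x1 t) (x2 t); rewrite nx.
  have := mr1 t t0 tT _ _ x21 => mm.
  rewrite gtr0_norm ?subr_gt0 // => hL.
  have := Br t t0 tT (x2 t); rewrite ler_norml => /andP[b1 b2].
  have := hr2 t t0 tT; lra.
- have := Ll2 t t0 tT (x1 t) (x2 t); rewrite nx.
  have := ml2 t t0 tT _ _ x21 => mm.
  rewrite gtr0_norm ?subr_gt0 // => hL.
  have := Bl t t0 tT (x1 t); rewrite ler_norml => /andP[b1 b2].
  have := hl1 t t0 tT; lra.
Qed.

Lemma abs_bounds (R : realType) (x : R) : - `|x| <= x /\ x <= `|x|.
Proof. by have := lexx `|x|; rewrite ler_norml => /andP[]. Qed.

Lemma key (R : realType) (T c C : R) (hT : 0 < T)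
  (hc : 0 < c) (hcC : c < C)
  (l1 r1 l2 r2 : R -> R -> R) (s1 s2 : R -> R) (a1 a2 : R)
  (x1 k1 x2 k2 : R -> R) :
  assumptionA T c C l1 r1 -> assumptionA T c C l2 r2 ->
  BSP_solution T l1 r1 s1 a1 x1 k1 -> BSP_solution T l2 r2 s2 a2 x2 k2 ->
  forall ds dl dr, 0 <= ds -> 0 <= dl -> 0 <= dr ->
  (forall t, 0 <= t -> t <= T -> `|s1 t - s2 t| <= ds) ->
  (forall t, 0 <= t -> t <= T -> forall x, `|l1 t x - l2 t x| <= dl) ->
  (forall t, 0 <= t -> t <= T -> forall x, `|r1 t x - r2 t x| <= dr) ->
  forall t, 0 <= t -> t <= T ->
  `|k1 t - k2 t| <= 2 * C / c * `|a1 - a2| + 4 * C / c * ds + 2 / c * Num.max dl dr.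
Proof.
move=> [_ [ml1 mr1] [Ll1 Lr1] _] [_ [ml2 mr2] [Ll2 Lr2] _].
move=> [_ hx1 hb1 [kr1 [kl1 [ir1 il1 hk1 zl1 zr1]]]].
move=> [_ hx2 hb2 [kr2 [kl2 [ir2 il2 hk2 zl2 zr2]]]].
move=> ds dl dr ds0 dl0 dr0 Bs Bl Br.
have inT : forall t, 0 <= t -> t <= T -> t \in `[0, T].
  by move=> t h1 h2; rewrite in_itv /= h1 h2.
pose p := `|a1 - a2| + 2 * ds.
have p0 : 0 <= p by rewrite /p; have := normr_ge0 (a1 - a2); lra.
have Bx : forall t, 0 <= t -> t <= T ->
    `|x1 t - x2 t - Ediff T kr1 kl1 kr2 kl2 t| <= p.
  move=> t t0 tT.
  rewrite (hx1 t (inT t t0 tT)) (hx2 t (inT t t0 tT)).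
  rewrite (hk1 t (inT t t0 tT)) (hk2 t (inT t t0 tT)).
  have TT : T <= T by [].
  have T0' : 0 <= T by lra.
  rewrite (hk1 T (inT T T0' TT)) (hk2 T (inT T T0' TT)) /Ediff.
  have [a3 a4] := abs_bounds (a1 - a2).
  have := Bs t t0 tT; have := Bs T T0' TT; rewrite !ler_norml => /andP[b1 b2] /andP[b3 b4].
  by apply/andP; split; rewrite /p; lra.
have Bx' : forall t, 0 <= t -> t <= T ->
    `|x2 t - x1 t - Ediff T kr2 kl2 kr1 kl1 t| <= p.
  move=> t t0 tT; have := Bx t t0 tT.
  suff -> : x2 t - x1 t - Ediff T kr2 kl2 kr1 kl1 t = - (x1 t - x2 t - Ediff T kr1 kl1 kr2 kl2 t).
    by rewrite normrN.
  rewrite /Ediff; ring.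
have T0' : 0 <= T by lra.
have hl1 : forall t, 0 <= t -> t <= T -> l1 t (x1 t) <= 0.
  by move=> t h1 h2; case/andP: (hb1 t (inT t h1 h2)).
have hr1 : forall t, 0 <= t -> t <= T -> 0 <= r1 t (x1 t).
  by move=> t h1 h2; case/andP: (hb1 t (inT t h1 h2)).
have hl2 : forall t, 0 <= t -> t <= T -> l2 t (x2 t) <= 0.
  by move=> t h1 h2; case/andP: (hb2 t (inT t h1 h2)).
have hr2 : forall t, 0 <= t -> t <= T -> 0 <= r2 t (x2 t).
  by move=> t h1 h2; case/andP: (hb2 t (inT t h1 h2)).
have L1 : forall t, 0 <= t -> t <= T -> forall x y, c * `|x - y| <= `|l1 t x - l1 t y|.
  by move=> t h1 h2 x y; case/andP: (Ll1 t (inT t h1 h2) x y).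
have L2 : forall t, 0 <= t -> t <= T -> forall x y, c * `|x - y| <= `|l2 t x - l2 t y|.
  by move=> t h1 h2 x y; case/andP: (Ll2 t (inT t h1 h2) x y).
have R1 : forall t, 0 <= t -> t <= T -> forall x y, c * `|x - y| <= `|r1 t x - r1 t y|.
  by move=> t h1 h2 x y; case/andP: (Lr1 t (inT t h1 h2) x y).
have R2 : forall t, 0 <= t -> t <= T -> forall x y, c * `|x - y| <= `|r2 t x - r2 t y|.
  by move=> t h1 h2 x y; case/andP: (Lr2 t (inT t h1 h2) x y).
have M1 : forall t, 0 <= t -> t <= T -> forall x y, x < y -> l1 t x < l1 t y.
  by move=> t h1 h2; apply: ml1; apply: inT.
have M2 : forall t, 0 <= t -> t <= T -> forall x y, x < y -> l2 t x < l2 t y.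
  by move=> t h1 h2; apply: ml2; apply: inT.
have N1 : forall t, 0 <= t -> t <= T -> forall x y, x < y -> r1 t x < r1 t y.
  by move=> t h1 h2; apply: mr1; apply: inT.
have N2 : forall t, 0 <= t -> t <= T -> forall x y, x < y -> r2 t x < r2 t y.
  by move=> t h1 h2; apply: mr2; apply: inT.
have Bl' : forall t, 0 <= t -> t <= T -> forall x, `|l2 t x - l1 t x| <= dl.
  by move=> t h1 h2 x; rewrite distrC; apply: Bl.
have Br' : forall t, 0 <= t -> t <= T -> forall x, `|r2 t x - r1 t x| <= dr.
  by move=> t h1 h2 x; rewrite distrC; apply: Br.
have S1 := side hT hc dl0 dr0 p0 ir1 il1 ir2 il2 zr1 zl2 hl1 hr2 M2 N1 L2 R1 Bl Br Bx.
have S2 := side hT hc dl0 dr0 p0 ir2 il2 ir1 il1 zr2 zl1 hl2 hr1 M1 N2 L1 R2 Bl' Br' Bx'.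
move=> t t0 tT.
have z0 : 0 <= 0 :> R by [].
have E10 := S1 0 z0 T0'; have E20 := S2 0 z0 T0'.
have E1t := S1 t t0 tT; have E2t := S2 t t0 tT.
move: E10 E20 E1t E2t; rewrite /Ediff.
case: ir1 => _ -> _; case: il1 => _ -> _; case: ir2 => _ -> _; case: il2 => _ -> _.
rewrite (hk1 t (inT t t0 tT)) (hk2 t (inT t t0 tT)) => E10 E20 E1t E2t.
have q1 : 1 <= C / c by rewrite ler_pdivlMr // mul1r; lra.
have na := normr_ge0 (a1 - a2).
have h1 : `|a1 - a2| <= C / c * `|a1 - a2| by rewrite ler_peMl.
have h2 : ds <= C / c * ds by rewrite ler_peMl.
have e1 : 2 * C / c * `|a1 - a2| = 2 * (C / c * `|a1 - a2|) by ring.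
have e2 : 4 * C / c * ds = 4 * (C / c * ds) by ring.
have e3 : 2 / c * Num.max dl dr = 2 * (Num.max dl dr / c) by ring.
rewrite e1 e2 e3; apply: dist_le; move: E10 E20 E1t E2t; rewrite /p; lra.
Qed.
Lemma wrap (R : realType) (X Ss SL SR : \bar R) (A B D : R) :
  (0 < B%:E)%E -> (0 < D%:E)%E -> (0 <= Ss)%E -> (0 <= SL)%E -> (0 <= SR)%E ->
  (forall ds dl dr, Ss = ds%:E -> SL = dl%:E -> SR = dr%:E ->
     (X <= (A + B * ds + D * Num.max dl dr)%:E)%E) ->
  (X <= A%:E + B%:E * Ss + D%:E * maxe SL SR)%E.
Proof.
move=> p4 p2.
case: Ss => [ds | | //] Ss0; last first.
  move=> SL0 SR0 _.
  rewrite gt0_muley // addey // addye ?leey //.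
  rewrite gt_eqF //; apply: (@lt_le_trans _ _ 0%E); first exact: ltNy0.
  apply: mule_ge0; first exact: ltW.
  by rewrite le_max SL0.
case: SL => [dl | | //] SL0; last first.
  by move=> _ _; rewrite maxye gt0_muley // -EFinM -EFinD addey // leey.
case: SR => [dr | | //] SR0; last first.
  by move=> _; rewrite maxey gt0_muley // -EFinM -EFinD addey // leey.
move=> H; rewrite -EFin_max -!EFinM -!EFinD.
exact: H.
Qed.

Unset Implicit Arguments.

Theorem mainTheorem2 (R : realType) (T c C : R) (hT : 0 < T)
  (hc : 0 < c) (hcC : c < C)
  (l1 r1 l2 r2 : R -> R -> R) (s1 s2 : R -> R) (a1 a2 : R)
  (x1 k1 x2 k2 : R -> R) :
  assumptionA T c C l1 r1 -> assumptionA T c C l2 r2 ->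
  {within `[0, T], continuous s1} -> {within `[0, T], continuous s2} ->
  l1 T a1 <= 0 <= r1 T a1 -> l2 T a2 <= 0 <= r2 T a2 ->
  BSP_solution T l1 r1 s1 a1 x1 k1 -> BSP_solution T l2 r2 s2 a2 x2 k2 ->
  (ereal_sup [set (`|k1 t - k2 t|)%:E | t in `[0%R, T]]
   <= (2 * C / c * `|a1 - a2|)%:E
      + (4 * C / c)%:E * ereal_sup [set (`|s1 t - s2 t|)%:E | t in `[0%R, T]]
      + (2 / c)%:E *
        Order.max (ereal_sup [set (`|l1 t x - l2 t x|)%:E | t in `[0%R, T] & x in [set: R]])
                  (ereal_sup [set (`|r1 t x - r2 t x|)%:E | t in `[0%R, T] & x in [set: R]]))%E.
Proof.
move=> hA1 hA2 _ _ _ _ b1 b2.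
have K := key hT hc hcC hA1 hA2 b1 b2.
set Ss := ereal_sup [set (`|s1 t - s2 t|)%:E | t in _].
set SL := ereal_sup [set (`|l1 t x - l2 t x|)%:E | t in _ & x in _].
set SR := ereal_sup [set (`|r1 t x - r2 t x|)%:E | t in _ & x in _].
have T0' : 0 <= T by lra.
have inT : forall t, 0 <= t -> t <= T -> `[0, T]%classic t.
  by move=> t h1 h2; rewrite /= in_itv /= h1 h2.
have bS : forall t, 0 <= t -> t <= T -> ((`|s1 t - s2 t|)%:E <= Ss)%E.
  by move=> t h1 h2; apply: ereal_sup_ubound; exists t => //; apply: inT.
have bL : forall t, 0 <= t -> t <= T -> forall x, ((`|l1 t x - l2 t x|)%:E <= SL)%E.
  by move=> t h1 h2 x; apply: ereal_sup_ubound; exists t; [exact: inT|exists x].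
have bR : forall t, 0 <= t -> t <= T -> forall x, ((`|r1 t x - r2 t x|)%:E <= SR)%E.
  by move=> t h1 h2 x; apply: ereal_sup_ubound; exists t; [exact: inT|exists x].
have Ss0 : (0 <= Ss)%E by apply: le_trans (bS T T0' (lexx T)); rewrite lee_fin.
have SL0 : (0 <= SL)%E by apply: le_trans (bL T T0' (lexx T) 0); rewrite lee_fin.
have SR0 : (0 <= SR)%E by apply: le_trans (bR T T0' (lexx T) 0); rewrite lee_fin.
apply: ge_ereal_sup => _ [t tin <-].
move: tin; rewrite /= in_itv /= => /andP[t0 tT].
apply: wrap => //.
- by rewrite lte_fin; apply: divr_gt0 => //; lra.
- by rewrite lte_fin; apply: divr_gt0 => //; lra.
move=> ds dl dr eS eL eR; rewrite lee_fin.
apply: K => //; rewrite -?lee_fin -?eS -?eL -?eR //.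
- by move=> u h1 h2; rewrite -lee_fin -eS; apply: bS.
- by move=> u h1 h2 x; rewrite -lee_fin -eL; apply: bL.
- by move=> u h1 h2 x; rewrite -lee_fin -eR; apply: bR.
Qed.
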